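(* Let $n \ge 2$ be an integer and let $1 \le \underline{x}_i < \bar{x}_i$ for $i \in \{1,2\}$. For every $(x_1,x_2) \in [\underline{x}_1,\bar{x}_1] \times [\underline{x}_2,\bar{x}_2]$, the set $S(x)$ of optimal solutions of the problem $$\max_{y \in \mathbb{R}^{n+2}} \; y_1 - y_n\,(x_1 + x_2 - y_{n+1} - y_{n+2})$$ subject to $y_1 + y_n = \tfrac12$, $y_i^2 \le y_{i+1}$ for $i \in \{1,\dots,n-1\}$, $y_i \ge 0$ for $i \in \{1,\dots,n\}$, $y_{n+1} \in [0,x_1]$, $y_{n+2} \in [-x_2,x_2]$, is a singleton. *)

(* Defs.v *)
From HB Require Import structures.
From mathcomp Require Import all_boot all_order all_algebra.
From mathcomp Require Import reals.
Set Implicit Arguments. Unset Strict Implicit. Unset Printing Implicit Defensive.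
Import Order.TTheory GRing.Theory Num.Theory.
Local Open Scope ring_scope.

(* A vector y in R^(n+2) is a function 'I_(n+2) -> R.  The paper uses 1-based
   indices y_1, ..., y_(n+2); [yc y k] is the paper's y_k (stored at index k-1). *)
Definition yc (R : realType) (n : nat) (y : 'I_(n.+2) -> R) (k : nat) : R :=
  y (inord k.-1).

Definition feasible (R : realType) (n : nat) (x1 x2 : R) (y : 'I_(n.+2) -> R) : Prop :=
  [/\ yc y 1 + yc y n = 2^-1,
      (forall i : nat, (1 <= i <= n.-1)%N -> yc y i ^+ 2 <= yc y i.+1),
      (forall i : nat, (1 <= i <= n)%N -> 0 <= yc y i),
      0 <= yc y n.+1 <= x1 &
      - x2 <= yc y n.+2 <= x2].

Definition objective (R : realType) (n : nat) (x1 x2 : R) (y : 'I_(n.+2) -> R) : R :=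
  yc y 1 - yc y n * (x1 + x2 - yc y n.+1 - yc y n.+2).

Definition optimal (R : realType) (n : nat) (x1 x2 : R) (y : 'I_(n.+2) -> R) : Prop :=
  @feasible R n x1 x2 y /\
  forall z : 'I_(n.+2) -> R, @feasible R n x1 x2 z -> @objective R n x1 x2 z <= @objective R n x1 x2 y.

(* Main.v *)
Require Import Defs.
From HB Require Import structures.
From mathcomp Require Import all_boot all_order all_algebra.
From mathcomp Require Import reals.
From mathcomp Require Import all_classical all_reals all_analysis.
From mathcomp Require Import zify lra.
From Stdlib Require Import FunctionalExtensionality.
Import Order.TTheory GRing.Theory Num.Theory numFieldNormedType.Exports.
Local Open Scope ring_scope.

Lemma exist_c (R : realType) (N : nat) : (0 < N)%N ->
  exists c : R, [/\ 0 < c, c <= 2^-1 & c + c ^+ N = 2^-1].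
Proof.
move=> N0.
have cf : {within `[0, 2^-1], continuous (fun t : R => t + t ^+ N)}%classic.
  have cc : continuous (fun t : R => t + t ^+ N).
    move=> x; exact: (@continuousD R R^o R (fun t => t) (fun t => t ^+ N) x cvg_id (@exprn_continuous R N x)).
  exact: continuous_subspaceT.
have h0 : (0:R) <= 2^-1 by rewrite invr_ge0.
have hv : Num.min ((fun t : R => t + t ^+ N) 0) ((fun t : R => t + t ^+ N) (2^-1)) <= 2^-1 <= Num.max ((fun t : R => t + t ^+ N) 0) ((fun t : R => t + t ^+ N) (2^-1)).
  rewrite /= expr0n eqn0Ngt N0 /= addr0.
  by rewrite ge_min le_max h0 /= lerDl exprn_ge0 ?orbT // invr_ge0.
have [c] := IVT h0 cf hv.
rewrite !in_itv /= => /andP[c0 c2] fc.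
exists c; split => //.
rewrite lt_neqAle c0 andbT; apply/eqP => c0'.
move: fc; rewrite -c0' expr0n eqn0Ngt N0 /= addr0 => /eqP.
by rewrite eq_sym invr_eq0 pnatr_eq0.
Qed.

Lemma chain (R : realType) (n : nat) (x1 x2 : R) (z : 'I_(n.+2) -> R) (j d : nat) :
  feasible x1 x2 z -> (1 <= j)%N -> (j + d <= n)%N ->
  yc z j ^+ (2 ^ d) <= yc z (j + d).
Proof.
case=> _ hch hnn _ _ hj.
elim: d => [|d IH] hd; first by rewrite expn0 expr1 addn0.
have h1 : yc z j ^+ (2 ^ d) <= yc z (j + d) by apply: IH; lia.
have h2 : yc z (j + d) ^+ 2 <= yc z (j + d).+1 by apply: hch; lia.
rewrite addnS expnSr exprM; apply: le_trans h2.
apply: lerXn2r => //; rewrite !nnegrE.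
- by apply: exprn_ge0; apply: hnn; lia.
- apply: hnn; lia.
Qed.

Definition ysol (R : realType) (n : nat) (c x1 x2 : R) : 'I_(n.+2) -> R :=
  fun i => if (i < n)%N then c ^+ (2 ^ i) else if (i == n :> nat) then x1 else x2.

Lemma ysolE (R : realType) (n : nat) (c x1 x2 : R) (k : nat) :
  (1 <= k <= n)%N -> yc (@ysol R n c x1 x2) k = c ^+ (2 ^ k.-1).
Proof.
move=> hk; rewrite /yc /ysol inordK; last by lia.
by have -> : (k.-1 < n)%N by lia.
Qed.

Lemma ysolE1 (R : realType) (n : nat) (c x1 x2 : R) :
  yc (@ysol R n c x1 x2) n.+1 = x1.
Proof.
by rewrite /yc /ysol inordK //= ltnn eqxx.
Qed.

Lemma ysolE2 (R : realType) (n : nat) (c x1 x2 : R) :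
  yc (@ysol R n c x1 x2) n.+2 = x2.
Proof.
rewrite /yc /ysol inordK //=.
have -> : (n.+1 < n)%N = false by lia.
by have -> : (n.+1 == n) = false by lia.
Qed.

Lemma bound (R : realType) (n : nat) (x1 x2 c : R) (z : 'I_(n.+2) -> R) :
  (2 <= n)%N -> 0 <= c -> c + c ^+ (2 ^ n.-1) = 2^-1 ->
  feasible x1 x2 z -> objective x1 x2 z <= yc z 1 /\ yc z 1 <= c.
Proof.
move=> n2 c0 hc fz.
have hchain := @chain R n x1 x2 z 1 n.-1 fz (leqnn 1).
have hN : yc z 1 ^+ (2 ^ n.-1) <= yc z n.
  have e : (1 + n.-1)%N = n by lia.
  have hl : (1 + n.-1 <= n)%N by lia.
  by move: (hchain hl); rewrite e.
clear hchain; case: fz => hs _ hnn /andP[h1 h2] /andP[h3 h4].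
have ha : 0 <= yc z 1 by apply: hnn; lia.
have hn : 0 <= yc z n by apply: hnn; lia.
split.
  rewrite /objective.
  have : 0 <= yc z n * (x1 + x2 - yc z n.+1 - yc z n.+2).
    by apply: mulr_ge0 => //; lra.
  lra.
rewrite leNgt; apply/negP => ca.
have : c ^+ (2 ^ n.-1) < yc z 1 ^+ (2 ^ n.-1).
  by rewrite ltrXn2r // expn_eq0.
lra.
Qed.

Lemma natfact (k n : nat) : (1 <= k <= n)%N -> (k.-1 + (n - k))%N = n.-1.
Proof. lia. Qed.

Lemma natfact2 (i n : nat) : (i < n.+2)%N -> (n <= i)%N -> i != n -> i.+1 = n.+2.
Proof. lia. Qed.

Theorem mainTheorem2 (R : realType) (n : nat) (lx1 ux1 lx2 ux2 x1 x2 : R) :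
  (2 <= n)%N ->
  1 <= lx1 -> lx1 < ux1 -> 1 <= lx2 -> lx2 < ux2 ->
  lx1 <= x1 <= ux1 -> lx2 <= x2 <= ux2 ->
  (* S(x) is a singleton *)
  exists y : 'I_(n.+2) -> R,
    forall z : 'I_(n.+2) -> R, @optimal R n x1 x2 z <-> z = y.
Proof.
move=> n2 l1 _ l2 _ /andP[hx1 _] /andP[hx2 _].
have [c [c0 c2 hc]] := @exist_c R (2 ^ n.-1) (expn_gt0 2 n.-1).
pose y := @ysol R n c x1 x2.
have yf : feasible x1 x2 y.
  split.
  - rewrite !ysolE; try lia. by rewrite expn0 expr1.
  - move=> i hi; rewrite !ysolE; try lia.
    have -> : i.+1.-1 = (i.-1).+1 by lia.
    by rewrite expnSr exprM.
  - by move=> i hi; rewrite ysolE // exprn_ge0 // ltW.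
  - rewrite ysolE1; apply/andP; split; lra.
  - rewrite ysolE2; apply/andP; split; lra.
have yo : objective x1 x2 y = c.
  rewrite /objective ysolE1 ysolE2 ysolE; last by lia.
  rewrite expn0 expr1; lra.
exists y => z; split; last first.
  move=> ->; split => // w fw.
  have [h1 h2] := @bound R n x1 x2 c w n2 (ltW c0) hc fw.
  rewrite yo; lra.
case=> fz zopt.
have := zopt y yf; rewrite yo => cz.
have [h1 h2] := @bound R n x1 x2 c z n2 (ltW c0) hc fz.
have ea : yc z 1 = c by lra.
have fz' := fz.
case: fz' => hs _ hnn /andP[h3 h4] /andP[h5 h6].
have eb : yc z n = c ^+ (2 ^ n.-1) by lra.
have bpos : 0 < c ^+ (2 ^ n.-1) by rewrite exprn_gt0.
have eB : x1 + x2 - yc z n.+1 - yc z n.+2 <= 0.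
  rewrite leNgt; apply/negP => hB.
  have := mulr_gt0 bpos hB; move: cz; rewrite /objective eb ea; lra.
have e1 : yc z n.+1 = x1 by lra.
have e2 : yc z n.+2 = x2 by lra.
have ek : forall k, (1 <= k <= n)%N -> yc z k = c ^+ (2 ^ k.-1).
  move=> k hk.
  have k1 : (0 < k)%N by case/andP: hk.
  have en : (k.-1 + (n - k))%N = n.-1 by apply: natfact.
  have lo : c ^+ (2 ^ k.-1) <= yc z k.
    have e : (1 + k.-1)%N = k by rewrite add1n prednK.
    have hl : (1 + k.-1 <= n)%N by rewrite e; case/andP: hk.
    by move: (@chain R n x1 x2 z 1 k.-1 fz (leqnn 1) hl); rewrite e ea.
  have hi : yc z k ^+ (2 ^ (n - k)) <= yc z n.
    have e : (k + (n - k))%N = n by rewrite subnKC //; case/andP: hk.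
    have hl : (k + (n - k) <= n)%N by rewrite e.
    have hk1 : (1 <= k)%N by [].
    by move: (@chain R n x1 x2 z k (n - k) fz hk1 hl); rewrite e.
  apply/eqP; rewrite eq_le lo andbT leNgt; apply/negP => hgt.
  have : (c ^+ (2 ^ k.-1)) ^+ (2 ^ (n - k)) < yc z k ^+ (2 ^ (n - k)).
    by rewrite ltrXn2r ?expn_eq0 // exprn_ge0 // ltW.
  rewrite -exprM -expnD.
  rewrite en.
  lra.
apply: functional_extensionality => i.
have key : yc z i.+1 = yc y i.+1.
  case: (ltnP i n) => hin.
    have hr : (1 <= i.+1 <= n)%N by [].
    by rewrite ek ?ysolE.
  case: (eqVneq (i : nat) n) => hin2.
    by rewrite hin2 e1 ysolE1.
  have -> : i.+1 = n.+2 by exact: natfact2 (ltn_ord i) hin hin2.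
  by rewrite e2 ysolE2.
by move: key; rewrite /yc /= !inord_val.
Qed.
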